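(* Let $n\ge2$, $\alpha\in(-n,0)$ and let $\phi$ be a Young function. (i) If $\underline\Lambda_\phi(\alpha)<\infty$, then $$\phi(xs)\le 2^{2n}\underline\Lambda_\phi(\alpha)\,\phi(2^{1-\alpha}x)\,s^{n/(1-\alpha)}\quad\forall\,0<s\le1,\ x>0.$$ (ii) If $\overline\Lambda_\phi(\alpha)<\infty$, then for every $x>0$, $\phi(xs^{-\alpha})s^{-n}\to0$ as $s\to\infty$, and $$\phi(xs)\le 2^{3n}\overline\Lambda_\phi(\alpha)\,\phi(x)\,s^{-n/\alpha}\quad\forall\,s\ge1,\ x>0.$$
   Context: A Young function is $\phi\in C([0,\infty))$, convex, with $\phi(0)=0$, $\phi(t)>0$ for $t>0$, $\lim_{t\to\infty}\phi(t)=\infty$. $\underline\Lambda_\phi(\alpha):=\sup_{x>0}\int_0^1\frac{\phi(t^{1-\alpha}x)}{\phi(x)}\frac{dt}{t^{n+1}}$, $\overline\Lambda_\phi(\alpha):=\sup_{x>0}\int_1^\infty\frac{\phi(t^{-\alpha}x)}{\phi(x)}\frac{dt}{t^{n+1}}$. *)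

(* Defs.v *)
From HB Require Import structures.
From mathcomp Require Import all_boot all_order all_algebra.
From mathcomp Require Import all_classical all_reals all_analysis.
Set Implicit Arguments. Unset Strict Implicit. Unset Printing Implicit Defensive.
Import Order.TTheory GRing.Theory Num.Theory.
Import numFieldNormedType.Exports.
Local Open Scope classical_set_scope.
Local Open Scope ring_scope.

(* Young function: phi is only relevant on [0, +oo); we take phi : R -> R
   and impose all conditions on [0, +oo). *)
Definition young_function (R : realType) (phi : R -> R) : Prop :=
  {within `[0%R, +oo[, continuous phi} /\
  (forall (x y l : R), 0 <= x -> 0 <= y -> 0 <= l <= 1 ->
     phi (l * x + (1 - l) * y) <= l * phi x + (1 - l) * phi y) /\
  phi 0 = 0 /\
  (forall t : R, 0 < t -> 0 < phi t) /\
  (phi @ +oo --> +oo).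

Definition Lambda_low (R : realType) (n : nat) (phi : R -> R) (alpha : R) : \bar R :=
  ereal_sup [set (\int[lebesgue_measure]_(t in `]0%R, 1%R[)
                    ((phi (t `^ (1 - alpha) * x) / phi x) / t ^+ n.+1)%:E)%E
            | x in `]0%R, +oo[].

Definition Lambda_up (R : realType) (n : nat) (phi : R -> R) (alpha : R) : \bar R :=
  ereal_sup [set (\int[lebesgue_measure]_(t in `]1%R, +oo[)
                    ((phi (t `^ (- alpha) * x) / phi x) / t ^+ n.+1)%:E)%E
            | x in `]0%R, +oo[].

(* Main.v *)
Require Import Defs.
From HB Require Import structures.
From mathcomp Require Import all_boot all_order all_algebra.
From mathcomp Require Import all_classical all_reals all_analysis measurable_realfun.
From mathcomp Require Import ring lra.
Import Order.TTheory GRing.Theory Num.Theory.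
Import numFieldNormedType.Exports.
Local Open Scope classical_set_scope.
Local Open Scope ring_scope.

Section helpers.
Context (R : realType) (phi : R -> R) (Y : young_function phi).

Lemma phi_ge0 (a : R) : 0 <= a -> 0 <= phi a.
Proof.
case: Y => _ [_ [p0 [pp _]]].
rewrite le_eqVlt => /predU1P[<-|/pp/ltW//]; by rewrite p0.
Qed.

Lemma phi_mono (a b : R) : 0 <= a -> a <= b -> phi a <= phi b.
Proof.
move=> a0 ab.
have b0 : 0 <= b by apply: le_trans ab.
move: b0; rewrite le_eqVlt => /predU1P[b0|b0].
  by have -> : a = b by apply/eqP; rewrite eq_le ab -b0 a0.
case: Y => _ [cvx [p0 [pp _]]].
have l01 : 0 <= a / b <= 1.
  by apply/andP; split; [exact: divr_ge0 a0 (ltW b0) | rewrite ler_pdivrMr // mul1r].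
have := cvx b 0 (a / b) (ltW b0) (lexx _) l01.
rewrite mulr0 addr0 p0 mulr0 addr0 divfK ?gt_eqF// => /le_trans; apply.
by case/andP: l01 => _ l1; rewrite ler_piMl // ltW // pp.
Qed.
Lemma phi_cont (u : R) : 0 < u -> {for u, continuous phi}.
Proof.
case: Y => c _ u0.
have [+ _] := (continuous_within_itvcyP 0 phi).1 c.
by apply; rewrite in_itv /= andbT.
Qed.

Lemma powR_cont (e t : R) : 0 < t -> {for t, continuous (fun s : R => s `^ e)}.
Proof.
move=> t0; apply: differentiable_continuous; apply/derivable1_diffP.
by apply: derivable_powR; rewrite in_itv /= andbT.
Qed.

Definition gI (n : nat) (e x : R) := fun t : R => (phi (t `^ e * x) / phi x) / t ^+ n.+1.

Lemma gI_cont n (e x t : R) : 0 < x -> 0 < t -> {for t, continuous (gI n e x)}.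
Proof.
move=> x0 t0.
rewrite /gI.
apply: continuousM; last first.
  apply: continuousV; first by rewrite expf_neq0 // gt_eqF.
  exact: exprn_continuous.
apply: continuousM; last exact: cst_continuous.
apply: (@continuous_comp _ _ _ (fun s => s `^ e * x) phi).
  apply: continuousM; first exact: powR_cont.
  exact: cst_continuous.
by apply: phi_cont; rewrite mulr_gt0 // powR_gt0.
Qed.

Lemma gI_meas n (e x : R) (D : set R) : 0 < x -> open D -> D `<=` `]0, +oo[ ->
  measurable_fun D (EFin \o gI n e x).
Proof.
move=> x0 oD D0; apply/measurable_EFinP.
apply: open_continuous_measurable_fun => // t; rewrite inE => /D0.
rewrite /= in_itv /= andbT => t0; exact: gI_cont.
Qed.


Lemma KL (D : set R) (g : R -> R) (r m : R) : measurable D ->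
  measurable_fun D (EFin \o g) -> (forall t, D t -> 0 <= g t) -> 0 < r ->
  `]r, 2 * r[ `<=` D -> 0 <= m -> (forall t, r < t < 2 * r -> m <= g t) ->
  ((m * r)%:E <= \int[lebesgue_measure]_(t in D) (g t)%:E)%E.
Proof.
move=> mD mg g0 r0 sub m0 gm.
pose I : set R := [set` `]r, 2 * r[].
have mI : measurable I by exact: measurable_itv.
have H2 : (\int[lebesgue_measure]_(t in I) (g t)%:E <=
           \int[lebesgue_measure]_(t in D) (g t)%:E)%E.
  apply: ge0_subset_integral => //.
have H1 : ((m * r)%:E <= \int[lebesgue_measure]_(t in I) (g t)%:E)%E.
  have -> : ((m * r)%:E = \int[lebesgue_measure]_(t in I) (cst m%:E t))%E.
    rewrite integral_cst //= lebesgue_measure_itv /= ifT; last first.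
      by rewrite lte_fin ltr_pMl // ltr1n.
    by rewrite -EFinD -EFinM mulr2n mulrDl mul1r addrK.
  apply: ge0_le_integral => //.
  - exact: (measurable_funS mD sub mg).
exact: le_trans H1 H2.
Qed.


Lemma q_ge0 n (a y t : R) : 0 <= a -> 0 < y -> 0 < t ->
  0 <= phi (a * y) / phi y / t ^+ n.+1.
Proof.
move=> a0 y0 t0.
have py : 0 < phi y by case: Y => _ [_ [_ [pp _]]]; exact: pp.
apply: divr_ge0; last by apply: exprn_ge0; exact: ltW.
apply: divr_ge0; last exact: ltW.
by apply: phi_ge0; apply: mulr_ge0 => //; exact: ltW.
Qed.

Lemma q_mono n (a b y t u : R) : 0 <= a -> a <= b -> 0 < y -> 0 < u -> u <= t ->
  phi (a * y) / phi y / t ^+ n.+1 <= phi (b * y) / phi y / u ^+ n.+1.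
Proof.
move=> a0 ab y0 u0 ut.
have py : 0 < phi y by case: Y => _ [_ [_ [pp _]]]; exact: pp.
have t0 : 0 < t by apply: lt_le_trans ut.
apply: ler_pM.
- by apply: divr_ge0; [apply: phi_ge0; apply: mulr_ge0 => //; exact: ltW | exact: ltW].
- by rewrite invr_ge0 exprn_ge0 // ltW.
- apply: ler_pM => //.
  + by apply: phi_ge0; apply: mulr_ge0 => //; exact: ltW.
  + by rewrite invr_ge0 ltW.
  + apply: phi_mono; first by apply: mulr_ge0 => //; exact: ltW.
    by rewrite ler_pM2r.
- rewrite lef_pV2 ?posrE ?exprn_gt0 //.
  by apply: lerXn2r => //; rewrite nnegrE ltW.
Qed.

Lemma KLphi n (e y r : R) (D : set R) : 0 <= e -> 0 < y -> 0 < r -> open D ->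
  D `<=` `]0, +oo[ -> `]r, 2 * r[ `<=` D ->
  ((phi (r `^ e * y) / phi y / (2 * r) ^+ n.+1 * r)%:E <=
     \int[lebesgue_measure]_(t in D) (gI n e y t)%:E)%E.
Proof.
move=> e0 y0 r0 oD D0 sub.
have py : 0 < phi y by case: Y => _ [_ [_ [pp _]]]; exact: pp.
apply: KL => //.
- exact: open_measurable.
- exact: (gI_meas n e y D y0 oD D0).
- move=> t /D0; rewrite /= in_itv /= andbT => t0.
  by rewrite /gI /=; apply: q_ge0 => //; exact: powR_ge0.
- by apply: q_ge0 => //; [exact: powR_ge0 | apply: mulr_gt0].
- move=> t /andP[rt tr].
  have t0 : 0 < t by apply: lt_trans rt.
  rewrite /gI /=; apply: q_mono => //; first exact: powR_ge0.
  - by apply: ge0_ler_powR => //; rewrite ?nnegrE ?ltW.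
  - exact: ltW.
Qed.


Lemma alg1 (P Q S : R) n : Q != 0 -> S != 0 ->
  P / S ^+ n = P / Q / (2 * S) ^+ n.+1 * S * (Q * 2 ^+ n.+1).
Proof.
move=> Q0 S0; rewrite exprMn !exprS; field.
by rewrite !expf_neq0 // S0 Q0.
Qed.

Lemma tail_lim n (g x : R) : 0 < g -> 0 < x ->
  (\int[lebesgue_measure]_(t in `]1%R, +oo[) (gI n g x t)%:E < +oo)%E ->
  (fun s : R => phi (x * s `^ g) / s ^+ n) @ +oo --> (0 : R).
Proof.
move=> g0 x0 fin.
have px : 0 < phi x by case: Y => _ [_ [_ [pp _]]]; exact: pp.
pose D : set R := [set` `]1%R, +oo[].
have mD : measurable D by exact: measurable_itv.
have oD : open D by exact: interval_open.
have D0 : D `<=` `]0, +oo[.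
  by move=> t; rewrite /D /= !in_itv /= !andbT; apply: lt_trans.
pose G := gI n g x.
have mG : measurable_fun D (EFin \o G) := gI_meas n g x D x0 oD D0.
have G0 : forall t, D t -> 0 <= G t.
  move=> t /D0; rewrite /= in_itv /= andbT => t0.
  by rewrite /G /gI /=; apply: q_ge0 => //; exact: powR_ge0.
pose A k : set R := [set` `]k%:R, +oo[].
pose fk k t := (G t * \1_(A k) t)%:E.
have mfk k : measurable_fun D (fk k).
  apply/measurable_EFinP; apply: measurable_funM.
    exact/measurable_EFinP.
  by apply: measurable_indic; exact: measurable_itv.
have ff : {ae lebesgue_measure, forall t, D t -> fk ^~ t @ \oo --> cst 0%E t}.
  apply: aeW => t Dt; apply: cvg_near_cst.
  exists (Num.truncn t).+1 => // k /= Hk.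
  rewrite /fk indicE memNset ?mulr0 //.
  rewrite /A /= in_itv /= andbT => Hkt.
  have H1 : (Num.truncn t).+1%:R <= k%:R :> R by rewrite ler_nat.
  by have := lt_trans (lt_le_trans (truncnS_gt t) H1) Hkt; rewrite ltxx.
have ig : lebesgue_measure.-integrable D (EFin \o G).
  apply/integrableP; split => //.
  have -> : (\int[lebesgue_measure]_(t in D) `|(EFin \o G) t| =
     \int[lebesgue_measure]_(t in D) (G t)%:E)%E.
    by apply: eq_integral => t; rewrite inE => Dt /=; rewrite ger0_norm // G0.
  exact: fin.
have fg : {ae lebesgue_measure, forall t k, D t -> (`|fk k t| <= (EFin \o G) t)%E}.
  apply: aeW => t k Dt; rewrite /fk /= lee_fin indicE.
  case: (t \in A k) => /=; first by rewrite mulr1 ger0_norm ?G0.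
  by rewrite mulr0 normr0 G0.
have [_ _ DC] := @dominated_convergence _ _ _ lebesgue_measure D mD fk (cst 0%E)
   (EFin \o G) mfk (measurable_cst _) ff ig fg.
move: DC; rewrite integral0 => /fine_cvgP[finN /cvgrPdist_lt Hc].
apply/cvgrPdist_lt => e e0.
pose C := phi x * 2 ^+ n.+1.
have C0 : 0 < C by rewrite mulr_gt0 // exprn_gt0.
pose eps := e / C.
have eps0 : 0 < eps by rewrite divr_gt0.
have [K1 _ HK1] := finN.
have [K2 _ HK2] := Hc eps eps0.
pose K := maxn K1 K2.
have fK : (\int[lebesgue_measure]_(t in D) fk K t)%E \is a fin_num.
  by apply: HK1; rewrite /= leq_maxl.
have lK : `|0 - fine (\int[lebesgue_measure]_(t in D) fk K t)%E| < eps.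
  by apply: HK2; rewrite /= leq_maxr.
exists (K%:R + 1); split; first by rewrite num_real.
move=> s Ks.
have s1 : 1 < s by apply: le_lt_trans Ks; rewrite lerDr.
have s0 : 0 < s by apply: lt_trans s1.
have sK : K%:R < s by apply: lt_trans Ks; rewrite ltrDl.
pose m := phi (s `^ g * x) / phi x / (2 * s) ^+ n.+1.
have m0 : 0 <= m by apply: q_ge0 => //; [exact: powR_ge0 | rewrite mulr_gt0].
have lb := KL D (fun t => G t * \1_(A K) t) s m mD (mfk K).
have := lb _ s0 _ m0 _; rewrite -/(fk K) -(fineK fK) lee_fin => {}lb.
have {}lb : m * s <= fine (\int[lebesgue_measure]_(t in D) fk K t)%E.
  apply: lb.
  - move=> t Dt; rewrite indicE; case: (t \in A K) => /=.
      by rewrite mulr1 G0.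
    by rewrite mulr0.
  - move=> t /=; rewrite !in_itv /= => /andP[st _].
    by rewrite /D /= in_itv /= andbT; apply: lt_trans st.
  - move=> t /andP[st ts].
    have t0 : 0 < t by apply: lt_trans st.
    rewrite indicE mem_set /=; last first.
      by rewrite /A /= in_itv /= andbT (lt_trans sK).
    rewrite mulr1 /G /gI /=; apply: q_mono => //; first exact: powR_ge0.
    + by apply: ge0_ler_powR => //; rewrite ?nnegrE ?ltW.
    + exact: ltW.
have ms : m * s < eps.
  apply: le_lt_trans lb _; apply: le_lt_trans lK.
  by rewrite sub0r normrN ler_norm.
have Fs : phi (x * s `^ g) / s ^+ n = m * s * C.
  by rewrite /m /C [x * _]mulrC; apply: alg1; rewrite gt_eqF.
rewrite sub0r normrN Fs ger0_norm; last by apply: mulr_ge0; [apply: mulr_ge0 =>//; exact: ltW | exact: ltW].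
by rewrite -ltr_pdivlMr.
Qed.



End helpers.

Lemma powR_invK (R : realType) (s b : R) : 0 <= s -> b != 0 -> (s `^ (1 / b)) `^ b = s.
Proof. by move=> s0 b0; rewrite -powRrM mul1r mulVf // powRr1. Qed.

Lemma powR_n (R : realType) (s b : R) n : 0 <= s -> (s `^ (1 / b)) ^+ n = s `^ (n%:R / b).
Proof. by move=> s0; rewrite -powR_mulrn ?powR_ge0 // -powRrM mul1r mulrC. Qed.

Lemma alg2 (R : realType) (P Q r L : R) n : 0 < Q -> 0 < r ->
  P / Q / (2 * r) ^+ n.+1 * r <= L -> P <= 2 ^+ n.+1 * L * Q * r ^+ n.
Proof.
move=> Q0 r0.
have -> : P / Q / (2 * r) ^+ n.+1 * r = P / (Q * 2 ^+ n.+1 * r ^+ n).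
  rewrite exprMn !exprS; field.
  by rewrite !expf_neq0 ?gt_eqF.
rewrite ler_pdivrMr; last by rewrite !mulr_gt0 // exprn_gt0.
by move=> H; apply: (le_trans H); rewrite le_eqVlt; apply/orP; left; apply/eqP; ring.
Qed.

Lemma alg3 (R : realType) (L Q S : R) n :
  2 ^+ n.+1 * L * Q * (S / 2) ^+ n = 2 * (L * Q * S ^+ n).
Proof.
rewrite exprMn exprVn exprS; field.
by rewrite expf_neq0.
Qed.

Theorem lemma2p1 (R : realType) (n : nat) (alpha : R) (phi : R -> R) :
  (2 <= n)%N -> - (n%:R) < alpha -> alpha < 0 -> young_function phi ->
  ((Lambda_low n phi alpha < +oo)%E ->
     forall s x : R, 0 < s -> s <= 1 -> 0 < x ->
       phi (x * s) <= 2 ^+ (2 * n) * fine (Lambda_low n phi alpha)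
                      * phi (2 `^ (1 - alpha) * x) * s `^ (n%:R / (1 - alpha)))
  /\
  ((Lambda_up n phi alpha < +oo)%E ->
     (forall x : R, 0 < x ->
        (fun s : R => phi (x * s `^ (- alpha)) / s ^+ n) @ +oo --> (0 : R))
     /\
     (forall s x : R, 1 <= s -> 0 < x ->
        phi (x * s) <= 2 ^+ (3 * n) * fine (Lambda_up n phi alpha)
                       * phi x * s `^ (- (n%:R) / alpha))).
Proof.
move=> n2 an a0 Y.
have ppos : forall t, 0 < t -> 0 < phi t by case: Y => _ [_ [_ [pp _]]].
split.
- move=> Lfin s x s0 s1 x0.
  set L := Lambda_low n phi alpha.
  pose b := 1 - alpha.
  have b0 : 0 < b by rewrite /b subr_gt0 (lt_trans a0).
  have ub (y : R) : 0 < y ->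
      (\int[lebesgue_measure]_(t in `]0%R, 1%R[) (@gI R phi n b y t)%:E <= L)%E.
    move=> y0; apply: ereal_sup_ubound; exists y => //.
    by rewrite /= in_itv /= andbT.
  have L0 : (0 <= L)%E.
    apply: le_trans (ub 1 ltr01); apply: integral_ge0 => t.
    rewrite /= in_itv /= => /andP[t0 _]; rewrite lee_fin /gI.
    by apply: (@q_ge0 R phi Y) => //; exact: powR_ge0.
  have Lr : L = (fine L)%:E by rewrite fineK // ge0_fin_numE.
  pose y := 2 `^ b * x.
  have y0 : 0 < y by rewrite mulr_gt0 // powR_gt0.
  pose S := s `^ (1 / b).
  have S0 : 0 < S by rewrite powR_gt0.
  have S1 : S <= 1.
    have -> : (1 : R) = 1 `^ (1 / b) by rewrite powR1.
    apply: ge0_ler_powR => //; rewrite ?nnegrE //.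
    - by apply: divr_ge0 => //; exact: ltW.
    - exact: ltW.
  pose r := S / 2.
  have r0 : 0 < r by rewrite divr_gt0.
  have sub1 : (`]0%R, 1%R[ : set R) `<=` `]0%R, +oo[.
    by move=> t; rewrite /= !in_itv /= => /andP[-> _].
  have sub2 : (`]r, 2 * r[ : set R) `<=` `]0%R, 1%R[.
    move=> t; rewrite /= !in_itv /= => /andP[rt tr].
    rewrite (lt_trans r0 rt) /=; apply: (lt_le_trans tr).
    by rewrite /r mulrC divfK // pnatr_eq0.
  have oI : open ([set` `]0%R, 1%R[] : set R) by exact: interval_open.
  have K := @KLphi R phi Y n b y r [set` `]0%R, 1%R[] (ltW b0) y0 r0 oI sub1 sub2.
  have {}K := le_trans K (ub y y0).
  rewrite Lr lee_fin in K.
  have ry : r `^ b * y = s * x.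
    rewrite /y mulrA -powRM; [|exact: ltW|by []].
    by rewrite /r divfK ?pnatr_eq0 // /S powR_invK ?gt_eqF // ltW.
  rewrite ry in K.
  have {}K := @alg2 R _ _ _ _ _ (ppos y y0) r0 K.
  rewrite /r alg3 /S powR_n in K; last exact: ltW.
  rewrite mulrC; apply: (le_trans K).
  rewrite -/b -!mulrA; apply: ler_pM => //.
  - apply: mulr_ge0; first by rewrite -lee_fin -Lr.
  - by apply: mulr_ge0; [exact: ltW (ppos y y0) | exact: powR_ge0].
  - by apply: ler_eXnr; rewrite ?muln_gt0 // ?ler1n // (ltn_trans _ n2).
move=> Lfin.
set L := Lambda_up n phi alpha.
pose g := - alpha.
have g0 : 0 < g by rewrite /g oppr_gt0.
have ub (y : R) : 0 < y ->
    (\int[lebesgue_measure]_(t in `]1%R, +oo[) (@gI R phi n g y t)%:E <= L)%E.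
  move=> y0; apply: ereal_sup_ubound; exists y => //.
  by rewrite /= in_itv /= andbT.
have L0 : (0 <= L)%E.
  apply: le_trans (ub 1 ltr01); apply: integral_ge0 => t.
  rewrite /= in_itv /= andbT => t1; rewrite lee_fin /gI.
  apply: (@q_ge0 R phi Y) => //; first exact: powR_ge0.
  exact: lt_trans t1.
have Lr : L = (fine L)%:E by rewrite fineK // ge0_fin_numE.
split.
  move=> x x0; apply: (@tail_lim R phi Y n g x g0 x0).
  exact: le_lt_trans (ub x x0) Lfin.
move=> s x s1 x0.
pose r := s `^ (1 / g).
have r1 : 1 <= r.
  have -> : (1 : R) = 1 `^ (1 / g) by rewrite powR1.
  apply: ge0_ler_powR => //; rewrite ?nnegrE //.
  - by apply: divr_ge0 => //; exact: ltW.
  - exact: (le_trans ler01 s1).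
have r0 : 0 < r by apply: lt_le_trans r1.
have sub1 : ([set` `]1%R, +oo[] : set R) `<=` `]0%R, +oo[.
  by move=> t; rewrite /= !in_itv /= !andbT; apply: lt_trans.
have sub2 : (`]r, 2 * r[ : set R) `<=` `]1%R, +oo[.
  move=> t; rewrite /= !in_itv /= andbT => /andP[rt _].
  exact: le_lt_trans rt.
have oI : open ([set` `]1%R, +oo[] : set R) by exact: interval_open.
have K := @KLphi R phi Y n g x r [set` `]1%R, +oo[] (ltW g0) x0 r0 oI sub1 sub2.
have {}K := le_trans K (ub x x0).
rewrite Lr lee_fin in K.
have rx : r `^ g * x = x * s.
  by rewrite /r powR_invK ?gt_eqF // 1?mulrC // (le_trans _ s1).
rewrite rx in K.
have {}K := @alg2 R _ _ _ _ _ (ppos x x0) r0 K.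
rewrite /r powR_n in K; last exact: (le_trans _ s1).
apply: (le_trans K).
have -> : - n%:R / alpha = n%:R / g by rewrite /g invrN mulrN mulNr.
rewrite -!mulrA; apply: ler_pM => //.
- apply: mulr_ge0; first by rewrite -lee_fin -Lr.
  by apply: mulr_ge0; [exact: ltW (ppos x x0) | exact: powR_ge0].
- rewrite ler_eXn2l ?ltr1n //.
  by rewrite -[X in (X < _)%N]mul1n ltn_pmul2r // (ltn_trans _ n2).
Qed.
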